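(* Let $K_{1,n}$ be the star graph with $n+1$ vertices and $n$ edges. Then $\mathcal{P}_d(\mathcal{E}_{K_{1,n}})=\emptyset$ for every $d\geq n+1$.
   Context: Work over an algebraically closed field $k$. The Fomin–Kirillov algebra $\mathcal{E}_m$ is the graded $k$-algebra generated by degree-$1$ elements $x_{ij}$, $1\leq i<j\leq m$, subject to: $x_{ij}^2=0$; $x_{ij}x_{kl}=x_{kl}x_{ij}$ whenever $\{i,j\}\cap\{k,l\}=\emptyset$; $x_{ij}x_{jk}-x_{jk}x_{ik}-x_{ik}x_{ij}=0$ and $x_{jk}x_{ij}-x_{ik}x_{jk}-x_{ij}x_{ik}=0$ for $i<j<k$. For a graph $G$ on vertex set $\{1,\dots,m\}$, $\mathcal{E}_G$ is the subalgebra of $\mathcal{E}_m$ generated by the $x_{ij}$ with $\{i,j\}$ an edge of $G$; here $K_{1,n}$ is viewed as a graph on $n+1$ labelled vertices (one centre joined to the other $n$). A degree-$d$ truncated point module over a connected graded algebra $A$ generated in degree $1$ is a graded cyclic module generated in degree $0$ with Hilbert series $1+t+\cdots+t^d$; $\mathcal{P}_d(A)$ is the space of such modules. *)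

(* Defs.v *)
From HB Require Import structures.
From mathcomp Require Import all_boot all_order all_algebra.
Set Implicit Arguments. Unset Strict Implicit. Unset Printing Implicit Defensive.
Import GRing.Theory.
Local Open Scope ring_scope.

(* Generators x_{ij} of the Fomin--Kirillov algebra E_m, 1 <= i < j <= m,
   are indexed (0-based) by pairs (i,j) of 'I_m with i < j. *)
Definition gen (m : nat) := {p : 'I_m * 'I_m | (p.1 < p.2)%N}.

(* Elements of the free algebra k<x_{ij}> as formal finite sums of
   (coefficient, word); the word [:: v1; ...; vr] stands for v1 v2 ... vr. *)
Definition ncpoly (k : closedFieldType) (m : nat) := seq (k * seq (gen m)).

Definition nccoef (k : closedFieldType) (m : nat) (f : ncpoly k m)
  (w : seq (gen m)) : k :=
  \sum_(t <- f) (if t.2 == w then t.1 else 0).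

Definition ncsandwich (k : closedFieldType) (m : nat) (a : seq (gen m))
  (r : ncpoly k m) (b : seq (gen m)) : ncpoly k m :=
  [seq (u.1, a ++ u.2 ++ b) | u <- r].

Definition FK_rel (k : closedFieldType) (m : nat) (r : ncpoly k m) : Prop :=
  (exists a : gen m, r = [:: (1, [:: a; a])])
  \/
  (exists a b : gen m,
      [/\ (val a).1 != (val b).1, (val a).1 != (val b).2,
          (val a).2 != (val b).1 & (val a).2 != (val b).2] /\
      r = [:: (1, [:: a; b]); (-1, [:: b; a])])
  \/
  (* for i<j<k, with a = x_ij, b = x_jk, c = x_ik:
       x_ij x_jk - x_jk x_ik - x_ik x_ij = 0 *)
  (exists a b c : gen m,
      [/\ (val a).2 = (val b).1, (val c).1 = (val a).1 & (val c).2 = (val b).2] /\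
      r = [:: (1, [:: a; b]); (-1, [:: b; c]); (-1, [:: c; a])])
  \/
  (exists a b c : gen m,
      [/\ (val a).2 = (val b).1, (val c).1 = (val a).1 & (val c).2 = (val b).2] /\
      r = [:: (1, [:: b; a]); (-1, [:: c; b]); (-1, [:: a; c])]).

(* f lies in the two-sided ideal I of k<x_{ij}> generated by the FK
   relations, i.e. f maps to 0 in E_m = k<x_{ij}>/I. *)
Definition in_FK_ideal (k : closedFieldType) (m : nat) (f : ncpoly k m) : Prop :=
  exists L : seq (k * seq (gen m) * ncpoly k m * seq (gen m)),
    (forall t, t \in L -> FK_rel t.1.2) /\
    forall w, nccoef f w =
      \sum_(t <- L) t.1.1.1 * nccoef (ncsandwich t.1.1.2 t.1.2 t.2) w.

(* A graph G on the vertex set {1..m} (0-based here) is given by its edge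
   set, a predicate on the generators (pairs i<j).  The subalgebra E_G of E_m
   generated by the x_e (e edge of G) is T(V_G)/J where
   J = { f in k<x_e : e in G> | f = 0 in E_m }.

   A graded cyclic E_G-module M generated in degree 0 with Hilbert series
   1 + t + ... + t^d has M_i = k m_i (0 <= i <= d).  As E_G is generated in
   degree 1, the module structure is given by the action of the degree-one
   generators: x_e m_i = lam i e m_{i+1} (i < d), x_e m_d = 0.
   The action of the word v1 ... vr on m_i is
   lam (i+r-1) v1 * ... * lam i vr * m_{i+r}  (and 0 if i + r > d). *)
Fixpoint word_act (k : closedFieldType) (m : nat) (lam : nat -> gen m -> k)
  (i : nat) (w : seq (gen m)) : k :=
  match w with
  | [::] => 1
  | v :: w' => lam (i + size w')%N v * word_act lam i w'
  end.

(* coefficient of m_{i + |w|} in f . m_i, summed over the terms of f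
   (terms pushing past degree d act by zero) *)
Definition ncpoly_act_at (k : closedFieldType) (m : nat) (d : nat)
  (lam : nat -> gen m -> k) (f : ncpoly k m) (i j : nat) : k :=
  \sum_(t <- f | size t.2 == j) (if (i + size t.2 <= d)%N then t.1 * word_act lam i t.2 else 0).

(* lam defines a degree-d truncated point module over E_G:
   (1) well-defined E_G-module: every element of J acts by zero
       (each homogeneous component of f . m_i vanishes);
   (2) cyclic, generated by M_0: each M_i (i <= d) equals (E_G)_i M_0, i.e.
       some word of length i in the edges of G maps m_0 to a nonzero
       multiple of m_i. *)
Definition is_truncated_point_module (k : closedFieldType) (m : nat)
  (G : pred (gen m)) (d : nat) (lam : nat -> gen m -> k) : Prop :=
  (forall f : ncpoly k m,
      (forall t, t \in f -> all G t.2) ->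
      in_FK_ideal f ->
      forall i j, ncpoly_act_at d lam f i j = 0)
  /\
  (forall i, (i <= d)%N ->
      exists w : seq (gen m), [/\ all G w, size w = i & word_act lam 0 w != 0]).

(* The star graph K_{1,n} on the n+1 vertices 'I_(n.+1), with centre 0:
   edges {0, j}, 1 <= j <= n. *)
Definition star_edges (n : nat) : pred (gen n.+1) :=
  fun x => (nat_of_ord (val x).1 == 0)%N.
Arguments star_edges n : clear implicits.

(* Main.v *)
Require Import Defs.
From HB Require Import structures.
From mathcomp Require Import all_boot all_order all_algebra.
From mathcomp Require Import ring zify.
Set Implicit Arguments. Unset Strict Implicit. Unset Printing Implicit Defensive.
Import GRing.Theory.
Local Open Scope ring_scope.

Section Alg.
Variables (k : closedFieldType) (n : nat).
Local Notation m := n.+1.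
Local Notation W := (seq (gen m)).
Implicit Types (phi psi : W -> k).

Definition J phi := exists L : seq (k * seq (gen m) * ncpoly k m * seq (gen m)),
  (forall t, t \in L -> FK_rel t.1.2) /\
  forall w, phi w = \sum_(t <- L) t.1.1.1 * nccoef (ncsandwich t.1.1.2 t.1.2 t.2) w.

Lemma J_ext phi psi : phi =1 psi -> J phi -> J psi.
Proof. by move=> e [L [HL HE]]; exists L; split=> // w; rewrite -e. Qed.

Lemma J0 : J (fun _ => 0).
Proof. by exists [::]; split=> // w; rewrite big_nil. Qed.

Lemma JD phi psi : J phi -> J psi -> J (fun w => phi w + psi w).
Proof.
move=> [L1 [H1 E1]] [L2 [H2 E2]]; exists (L1 ++ L2); split.
  by move=> t; rewrite mem_cat => /orP [] ?; [apply: H1|apply: H2].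
by move=> w; rewrite big_cat /= E1 E2.
Qed.

Lemma JZ c phi : J phi -> J (fun w => c * phi w).
Proof.
move=> [L [H E]]; exists [seq (c * t.1.1.1, t.1.1.2, t.1.2, t.2) | t <- L]; split.
  by move=> t /mapP [u uL ->] /=; apply: H.
by move=> w; rewrite big_map E mulr_sumr; apply: eq_bigr => t _ /=; rewrite mulrA.
Qed.

Definition ext (a b w : W) : option W :=
  let u := take (size w - size a - size b)%N (drop (size a) w) in
  if w == a ++ u ++ b then Some u else None.

Definition sw (a : W) phi (b : W) : W -> k :=
  fun w => if ext a b w is Some u then phi u else 0.

Lemma ext_eq a b v w : (a ++ v ++ b == w) = (ext a b w == Some v).
Proof.
rewrite /ext; case: eqP => [<-|ne].
  have -> : (size (a ++ v ++ b) - size a - size b)%N = size v.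
    by rewrite !size_cat; lia.
  by rewrite drop_size_cat // take_size_cat // eqxx /=; case: eqP.
case: ifP => [/eqP e|_] //.
by apply/esym/eqP => -[e']; apply: ne; rewrite e e'.
Qed.

Lemma sand_assoc a x (r : ncpoly k m) y b :
  ncsandwich (a ++ x) r (y ++ b) = ncsandwich a (ncsandwich x r y) b.
Proof. by rewrite /ncsandwich -map_comp; apply: eq_map => u /=; rewrite !catA. Qed.

Lemma nccoef_sand a (f : ncpoly k m) b w :
  nccoef (ncsandwich a f b) w = sw a (nccoef f) b w.
Proof.
rewrite /nccoef /ncsandwich big_map /sw.
case E: (ext a b w) => [u|].
  apply: eq_bigr => t _ /=; rewrite ext_eq E.
  by case: eqP => [[->]|ne]; case: eqP => // e; case: ne; rewrite e.
by apply: big1 => t _ /=; rewrite ext_eq E.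
Qed.

Lemma Jsw a b phi : J phi -> J (sw a phi b).
Proof.
move=> [L [H E]]; exists [seq (t.1.1.1, a ++ t.1.1.2, t.1.2, t.2 ++ b) | t <- L]; split.
  by move=> t /mapP [u uL ->] /=; apply: H.
move=> w; rewrite big_map /sw; case Ew: (ext a b w) => [u|].
  rewrite E; apply: eq_bigr => t _ /=.
  by rewrite sand_assoc [in RHS]nccoef_sand /sw Ew.
by rewrite big1 // => t _ /=; rewrite sand_assoc nccoef_sand /sw Ew mulr0.
Qed.

Lemma Jrel (r : ncpoly k m) : FK_rel r -> J (nccoef r).
Proof.
move=> H; exists [:: (1, [::], r, [::])]; split.
  by move=> t; rewrite inE => /eqP ->.
move=> w; rewrite big_cons big_nil /= addr0 mul1r.
congr nccoef; rewrite /ncsandwich; elim: r {H} => //= -[c u] r <-.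
by rewrite cats0.
Qed.

Definition mono (v : W) : W -> k := fun u => if v == u then 1 else 0.

Lemma sw_mono a v b : sw a (mono v) b =1 mono (a ++ v ++ b).
Proof.
move=> w; rewrite /sw /mono ext_eq; case: (ext a b w) => [u|] //=.
by case: eqP => [->|ne]; case: eqP => // -[e]; case: ne; rewrite e.
Qed.


Definition eqv phi psi := J (fun w => phi w - psi w).

Lemma J_rw phi psi : phi =1 psi -> J psi -> J phi.
Proof. by move=> e; apply: J_ext => w; rewrite e. Qed.

Lemma eqv_rw phi phi' psi psi' :
  phi =1 phi' -> psi =1 psi' -> eqv phi' psi' -> eqv phi psi.
Proof. by move=> e1 e2; apply: J_ext => w; rewrite e1 e2. Qed.

Lemma eqv_ext phi psi : phi =1 psi -> eqv phi psi.
Proof. by move=> e; apply: J_ext J0 => w; rewrite e subrr. Qed.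

Lemma eqv_refl phi : eqv phi phi.
Proof. exact: eqv_ext. Qed.

Lemma eqv_sym phi psi : eqv phi psi -> eqv psi phi.
Proof. by move/(JZ (-1)); apply: J_ext => w; rewrite mulN1r opprB. Qed.

Lemma eqv_trans phi psi chi : eqv phi psi -> eqv psi chi -> eqv phi chi.
Proof. by move=> h1 h2; apply: J_ext (JD h1 h2) => w; rewrite subrKA. Qed.

Lemma eqv_add p1 p2 q1 q2 : eqv p1 q1 -> eqv p2 q2 ->
  eqv (fun w => p1 w + p2 w) (fun w => q1 w + q2 w).
Proof. by move=> h1 h2; apply: J_ext (JD h1 h2) => w; rewrite opprD addrACA. Qed.

Lemma eqv_scale c phi psi : eqv phi psi -> eqv (fun w => c * phi w) (fun w => c * psi w).
Proof. by move/(JZ c); apply: J_ext => w; rewrite mulrBr. Qed.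

Lemma eqv_sw a b phi psi : eqv phi psi -> eqv (sw a phi b) (sw a psi b).
Proof. by move/(Jsw a b); apply: J_ext => w; rewrite /sw; case: ext => //; rewrite subr0. Qed.

Lemma eqv_J phi psi : eqv phi psi -> J psi -> J phi.
Proof. by move=> h1 h2; apply: J_ext (JD h1 h2) => w; rewrite subrK. Qed.

Lemma J_eqv phi : J phi -> eqv phi (fun _ => 0).
Proof. by apply: J_ext => w; rewrite subr0. Qed.

Lemma eqv_sum (s : seq nat) (F G : nat -> W -> k) :
  (forall i, i \in s -> eqv (F i) (G i)) ->
  eqv (fun w => \sum_(i <- s) F i w) (fun w => \sum_(i <- s) G i w).
Proof.
elim: s => [|i s IH] h.
  by apply: eqv_ext => w; rewrite !big_nil.
apply: eqv_rw (fun w => big_cons _ _ _ _ _ _) (fun w => big_cons _ _ _ _ _ _) _.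
apply: eqv_add; first by apply: h; rewrite inE eqxx.
by apply: IH => j js; apply: h; rewrite inE js orbT.
Qed.

Lemma Jrel_eqv (r : ncpoly k m) phi psi : FK_rel r ->
  (forall w, phi w - psi w = nccoef r w) -> eqv phi psi.
Proof. by move=> H e; apply: J_rw (Jrel H). Qed.

Definition star (z : gen m) := star_edges n z.

Lemma star1 z : star z -> nat_of_ord (val z).1 = 0%N.
Proof. by move/eqP. Qed.

Lemma star_pos z : star z -> (0 < (val z).2)%N.
Proof. by move=> sz; have := valP z; rewrite /= star1. Qed.

Lemma star_inj p q : star p -> star q -> nat_of_ord (val p).2 = (val q).2 -> p = q.
Proof.
move: p q => [[p1 p2] hp] [[q1 q2] hq]; rewrite /star /star_edges /= => /eqP e1 /eqP e2 e.
apply: val_inj => /=.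
have -> : p1 = q1 by apply: val_inj; rewrite /= e1 e2.
by have -> : p2 = q2 by apply: val_inj.
Qed.

Lemma ord_neq (x y : 'I_m) : nat_of_ord x != nat_of_ord y -> x != y.
Proof. by apply: contra => /eqP ->. Qed.

Lemma ord_eq (x y : 'I_m) : nat_of_ord x = nat_of_ord y -> x = y.
Proof. by move=> e; apply: val_inj. Qed.

Ltac coef_tac := rewrite /nccoef /mono !big_cons big_nil /=;
  repeat (case: eqP => _ /=); ring.

Lemma comm_rel (r z : gen m) :
  (val r).1 != (val z).1 -> (val r).1 != (val z).2 ->
  (val r).2 != (val z).1 -> (val r).2 != (val z).2 ->
  eqv (mono [:: r; z]) (mono [:: z; r]).
Proof.
move=> h1 h2 h3 h4.
apply: (@Jrel_eqv [:: (1, [:: r; z]); (-1, [:: z; r])]).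
  by right; left; exists r, z; split.
by move=> w; coef_tac.
Qed.


Lemma E1 p q : star p -> star q -> p != q ->
  exists r : gen m, exists s : k, (s = 1 \/ s = -1) /\
    (forall z, star z -> z != p -> z != q -> eqv (mono [:: r; z]) (mono [:: z; r])) /\
    eqv (mono [:: q; p]) (fun w => s * mono [:: p; r] w - s * mono [:: r; q] w).
Proof.
move=> sp sq npq.
have p1 := star1 sp; have q1 := star1 sq.
have p2 := star_pos sp; have q2 := star_pos sq.
have e1 : (val q).1 = (val p).1 by apply: ord_eq; rewrite p1 q1.
have p1' : nat_of_ord (sval p).1 = 0%N := p1.
have q1' : nat_of_ord (sval q).1 = 0%N := q1.
have p2' : (0 < (sval p).2)%N := p2.
have q2' : (0 < (sval q).2)%N := q2.
case: (ltngtP (val p).2 (val q).2) => hab; last first.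
- by move: npq; rewrite (star_inj sp sq hab) eqxx.
-
  exists (exist _ ((val q).2, (val p).2) hab), (-1); split; first by right.
  split.
    move=> z sz zp zq; have z1 := star1 sz.
    have z1' : nat_of_ord (sval z).1 = 0%N := z1.
    apply: comm_rel => /=; apply: ord_neq; rewrite ?z1; try lia.
      by apply/eqP => e; move: zq; rewrite (star_inj sz sq (esym e)) eqxx.
    by apply/eqP => e; move: zp; rewrite (star_inj sz sp (esym e)) eqxx.

  have R : @FK_rel k m [:: (1, [:: exist _ ((val q).2, (val p).2) hab; q]);
                     (-1, [:: p; exist _ ((val q).2, (val p).2) hab]);
                     (-1, [:: q; p])].
    by right; right; right; exists q, (exist _ ((val q).2, (val p).2) hab), p; split.
  rewrite /eqv; apply: J_rw (JZ (-1) (Jrel R)) => w; coef_tac.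
- exists (exist _ ((val p).2, (val q).2) hab), 1; split; first by left.
  split.
    move=> z sz zp zq; have z1 := star1 sz.
    have z1' : nat_of_ord (sval z).1 = 0%N := z1.
    apply: comm_rel => /=; apply: ord_neq; rewrite ?z1; try lia.
      by apply/eqP => e; move: zp; rewrite (star_inj sz sp (esym e)) eqxx.
    by apply/eqP => e; move: zq; rewrite (star_inj sz sq (esym e)) eqxx.
  have R : @FK_rel k m [:: (1, [:: p; exist _ ((val p).2, (val q).2) hab]);
                     (-1, [:: exist _ ((val p).2, (val q).2) hab; q]);
                     (-1, [:: q; p])].
    by right; right; left; exists p, (exist _ ((val p).2, (val q).2) hab), q; split.
  rewrite /eqv; apply: J_rw (JZ (-1) (Jrel R)) => w; coef_tac.
Qed.


Lemma eqv_ctx a b u v : eqv (mono u) (mono v) -> eqv (mono (a ++ u ++ b)) (mono (a ++ v ++ b)).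
Proof.
move/(eqv_sw a b); apply: eqv_rw => w; by rewrite sw_mono.
Qed.

Lemma sw_lin a b (s : k) phi psi :
  sw a (fun w => s * phi w - s * psi w) b =1 (fun w => s * sw a phi b w - s * sw a psi b w).
Proof. by move=> w; rewrite /sw; case: ext => //; rewrite !mulr0 subr0. Qed.

Lemma E1ctx a b (s : k) u x y : eqv (mono u) (fun w => s * mono x w - s * mono y w) ->
  eqv (mono (a ++ u ++ b)) (fun w => s * mono (a ++ x ++ b) w - s * mono (a ++ y ++ b) w).
Proof.
move/(eqv_sw a b); apply: eqv_rw => w; first by rewrite sw_mono.
by rewrite sw_lin !sw_mono.
Qed.

Lemma commute_word r T : (forall z, z \in T -> eqv (mono [:: r; z]) (mono [:: z; r])) ->
  eqv (mono (r :: T)) (mono (T ++ [:: r])).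
Proof.
elim: T => [|z T IH] h; first exact: eqv_refl.
apply: eqv_trans (_ : eqv _ (mono (z :: r :: T))) _.
  by have := eqv_ctx [::] T (h z (mem_head _ _)).
have := eqv_ctx [:: z] [::] (IH (fun y yT => h y (mem_behead (s := z :: T) yT))).
by rewrite /= !cats0.
Qed.

Lemma sw_sum a b (s : seq nat) (F : nat -> W -> k) :
  sw a (fun w => \sum_(j <- s) F j w) b =1 (fun w => \sum_(j <- s) sw a (F j) b w).
Proof. by move=> w; rewrite /sw; case: ext => //; rewrite big1. Qed.

Definition win (c : W) (j : nat) := drop j c ++ take j.+1 c.
Definition Rf (c : W) : W -> k := fun w => \sum_(j <- iota 0 (size c)) mono (win c j) w.


Lemma win_c0 a M b : win (a :: rcons M b) 0 = a :: M ++ [:: b; a].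
Proof. by rewrite /win drop0 /= take0 -cats1 -catA. Qed.

Lemma win_cN a M b : win (a :: rcons M b) (size M).+1 = b :: a :: M ++ [:: b].
Proof.
rewrite /win /= -cats1 drop_size_cat // take_oversize //.
by rewrite size_cat /= addn1.
Qed.

Lemma win_ci a M b i : (i < size M)%N ->
  win (a :: rcons M b) i.+1 = drop i M ++ b :: a :: take i.+1 M.
Proof.
move=> hi; rewrite /win /= -cats1 drop_cat ifT // take_cat.
case: ifP => h; first by rewrite -catA.
have -> : i.+1 = size M by lia.
by rewrite subnn take0 cats0 take_size -catA.
Qed.

Lemma win_a0 a M : win (a :: M) 0 = a :: M ++ [:: a].
Proof. by rewrite /win drop0 /= take0. Qed.

Lemma win_ai a M i : win (a :: M) i.+1 = drop i M ++ a :: take i.+1 M.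
Proof. by []. Qed.

Lemma win_bN M b : win (rcons M b) (size M) = b :: M ++ [:: b].
Proof.
rewrite /win -cats1 drop_size_cat // take_oversize //.
by rewrite size_cat /= addn1.
Qed.

Lemma win_bi M b i : (i < size M)%N -> win (rcons M b) i = drop i M ++ b :: take i.+1 M.
Proof.
move=> hi; rewrite /win -cats1 drop_cat ifT // take_cat.
case: ifP => h; first by rewrite -catA.
have -> : i.+1 = size M by lia.
by rewrite subnn take0 cats0 take_size -catA.
Qed.


Lemma sw_mono_eta a v b w : sw a (fun u => mono v u) b w = mono (a ++ v ++ b) w.
Proof. exact: sw_mono. Qed.

Lemma sum_iota1 N (F : nat -> k) :
  \sum_(j <- iota 1 N) F j = \sum_(i <- iota 0 N) F i.+1.
Proof. by rewrite -[1%N]addn0 iotaDl big_map. Qed.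

Lemma sum_iotaS N (F : nat -> k) :
  \sum_(j <- iota 0 N.+1) F j = \sum_(i <- iota 0 N) F i + F N.
Proof. by rewrite -addn1 iotaD big_cat /= big_cons big_nil addr0. Qed.

Lemma sum_iota0S N (F : nat -> k) :
  \sum_(j <- iota 0 N.+1) F j = F 0%N + \sum_(i <- iota 0 N) F i.+1.
Proof. by rewrite /= big_cons sum_iota1. Qed.

Lemma step a M b : star a -> star b -> all star M -> uniq (a :: rcons M b) ->
  J (Rf (a :: M)) -> J (Rf (rcons M b)) -> J (Rf (a :: rcons M b)).
Proof.
move=> sa sb sM /= /andP [aMb]; rewrite rcons_uniq => /andP [bM uM] JA JB.
move: aMb; rewrite mem_rcons inE negb_or => /andP [ab aM].
have [r [s [s1 [cm E]]]] := E1 sa sb ab.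
have cmw : forall T, {subset T <= M} -> eqv (mono (r :: T)) (mono (T ++ [:: r])).
  move=> T TM; apply: commute_word => z /TM zM; apply: cm.
  - exact: (allP sM).
  - by apply: contraNneq aM => <-.
  - by apply: contraNneq bM => <-.
set N := size M.
pose Rhs := fun w => s * sw [::] (Rf (a :: M)) [:: r] w - s * sw [:: r] (Rf (rcons M b)) [::] w.
have JR : J Rhs.
  apply: J_rw (JD (JZ s (Jsw [::] [:: r] JA)) (JZ (- s) (Jsw [:: r] [::] JB))) => w.
  by rewrite /Rhs mulNr.
apply: eqv_J JR.
pose A0 := mono (a :: M ++ [:: b; a]).
pose A1 := mono (b :: a :: M ++ [:: b]).
pose Mi := fun i => mono (drop i M ++ b :: a :: take i.+1 M).
pose B0 := mono (a :: M ++ [:: a; r]).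
pose B1 := mono (r :: b :: M ++ [:: b]).
pose Ni := fun i => mono (drop i M ++ a :: take i.+1 M ++ [:: r]).
pose Pi := fun i => mono (r :: drop i M ++ b :: take i.+1 M).
apply: (@eqv_rw _ (fun w => (A0 w + A1 w) + \sum_(i <- iota 0 N) Mi i w) _
   (fun w => (s * B0 w - s * B1 w) + \sum_(i <- iota 0 N) (s * Ni i w - s * Pi i w))).
- move=> w; rewrite /Rf /= size_rcons -/N big_cons -[N.+1]addn1 iotaD big_cat /=.
  rewrite big_cons big_nil sum_iota1 addr0 win_c0 add1n win_cN.
  have -> : \sum_(i <- iota 0 N) mono (win (a :: rcons M b) i.+1) w =
            \sum_(i <- iota 0 N) Mi i w.
    by rewrite big_seq_cond [RHS]big_seq_cond; apply: eq_bigr => i;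
      rewrite andbT mem_iota /= => hi; rewrite win_ci.
  rewrite /A0 /A1; ring.
- move=> w; rewrite /Rhs !sw_sum /Rf /= size_rcons -/N.
  rewrite [in X in s * X - _]sum_iota0S [in X in _ - s * X]sum_iotaS.
  rewrite !sw_mono_eta win_a0 win_bN /= cats0.
  have -> : \sum_(i <- iota 0 N) sw [::] (fun u => mono (win (a :: M) i.+1) u) [:: r] w =
            \sum_(i <- iota 0 N) Ni i w.
    by apply: eq_bigr => i _; rewrite sw_mono_eta /= win_ai /Ni -catA.
  have -> : \sum_(i <- iota 0 N) sw [:: r] (fun u => mono (win (rcons M b) i) u) [::] w =
            \sum_(i <- iota 0 N) Pi i w.
    by rewrite big_seq_cond [RHS]big_seq_cond; apply: eq_bigr => i;
      rewrite andbT mem_iota /= => hi; rewrite sw_mono_eta /= win_bi // cats0.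
  rewrite sumrB -!mulr_sumr /B0 /B1 -!catA /=; ring.
apply: eqv_add.
- have hA0 : eqv A0 (fun w => s * B0 w - s * mono (a :: M ++ [:: r; b]) w) :=
    E1ctx (a :: M) [::] E.
  have hA1 : eqv A1 (fun w => s * mono (a :: r :: M ++ [:: b]) w - s * B1 w) :=
    E1ctx [::] (M ++ [:: b]) E.
  have hc := eqv_sym (eqv_ctx [:: a] [:: b] (cmw M (fun z h => h))).
  rewrite -catA in hc.
  rewrite /eqv; apply: J_rw (JD (JD hA0 hA1) (JZ (-s) hc)) => w /=; ring.
- apply: eqv_sum => i; rewrite mem_iota /= => hi.
  have hM : eqv (Mi i) (fun w => s * mono (drop i M ++ a :: r :: take i.+1 M) w
                               - s * mono (drop i M ++ r :: b :: take i.+1 M) w) :=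
    E1ctx (drop i M) (take i.+1 M) E.
  have h1 := eqv_ctx (drop i M ++ [:: a]) [::] (cmw (take i.+1 M) (fun z h => mem_take h)).
  rewrite !cats0 -!catA in h1.
  have h2 := eqv_sym (eqv_ctx [::] (b :: take i.+1 M) (cmw (drop i M) (fun z h => mem_drop h))).
  rewrite -catA in h2.
  rewrite /eqv; apply: J_rw (JD (JD hM (JZ s h1)) (JZ (-s) h2)) => w; rewrite /Ni /Pi /=; ring.
Qed.


Lemma Rf_J c : all star c -> uniq c -> (0 < size c)%N -> J (Rf c).
Proof.
move: {2}(size c) (leqnn (size c)) => N; elim: N c => [|N IH] c hN sc uc pc.
  by move: hN pc; rewrite leqn0 => /eqP ->.
case: c hN sc uc pc => [|a c1] //= hN /andP [sa sc1] uc _.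
case/lastP: c1 hN sc1 uc => [|M b] hN sc1 uc.
  have R : @FK_rel k m [:: (1, [:: a; a])] by left; exists a.
  apply: J_rw (Jrel R) => w; rewrite /Rf /= big_cons big_nil addr0.
  by rewrite /nccoef big_cons big_nil addr0.
move: sc1; rewrite all_rcons => /andP [sb sM].
move: (uc) => /andP [aMb]; rewrite rcons_uniq => /andP [bM uM].
move: aMb; rewrite mem_rcons inE negb_or => /andP [ab aM].
move: hN; rewrite size_rcons => hN.
apply: step => //.
- apply: IH => //=; [by rewrite sa | by rewrite aM].
- apply: IH; rewrite ?size_rcons ?all_rcons ?rcons_uniq ?sb ?bM //.
Qed.

End Alg.

Section Mod.
Variables (k : closedFieldType) (n : nat) (lam : nat -> gen n.+1 -> k).
Local Notation m := n.+1.
Local Notation W := (seq (gen m)).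

Lemma wa_cat i (w1 w2 : W) :
  word_act lam i (w1 ++ w2) = word_act lam (i + size w2) w1 * word_act lam i w2.
Proof.
elim: w1 => [|v w1 IH] /=; first by rewrite mul1r.
by rewrite IH mulrA size_cat -addnA [(size w2 + _)%N]addnC.
Qed.

Lemma wa_nz x0 i (w : W) : word_act lam i w != 0 ->
  forall t, (t < size w)%N -> lam (i + t) (nth x0 (rev w) t) != 0.
Proof.
elim: w => [|v w IH] //= h t ht.
have [h1 h2] : lam (i + size w) v != 0 /\ word_act lam i w != 0.
  by move: h; rewrite mulf_eq0 negb_or => /andP.
rewrite rev_cons nth_rcons size_rev.
case: (ltngtP t (size w)) => [lt|gt|->].
- exact: IH.
- by move: ht; rewrite ltnS leqNgt gt.
- by rewrite ?ltnn ?eqxx.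
Qed.

Lemma wa_rev x0 i (es : W) :
  (forall t, (t < size es)%N -> lam (i + t) (nth x0 es t) != 0) ->
  word_act lam i (rev es) != 0.
Proof.
elim: es i => [|e es IH] i h /=; first by rewrite oner_eq0.
rewrite rev_cons -cats1 wa_cat /= mulr1 mulf_neq0 //.
  by rewrite addn1; apply: IH => t ht; rewrite addSnnS; apply: (h t.+1).
by have := h 0%N isT; rewrite addn0.
Qed.


Lemma size_win (c : W) j : (j < size c)%N -> size (win c j) = (size c).+1.
Proof.
move=> hj; rewrite /win size_cat size_drop size_take.
case: ifP => h; lia.
Qed.

Lemma claim (d : nat)
  (H1 : forall f : ncpoly k m, (forall t, t \in f -> all (star_edges n) t.2) ->
        in_FK_ideal f -> forall i j, ncpoly_act_at d lam f i j = 0)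
  (U : W) (x0 : gen m) (sU : all (@star n) U) (hU : size U = d)
  (nzU : forall t, (t < d)%N -> lam t (nth x0 U t) != 0) :
  forall g i a, (0 < g)%N -> (i + g < d)%N -> star a -> lam i a != 0 ->
    lam (i + g) a != 0 -> False.
Proof.
move=> g; move: {2}g (leqnn g) => G; elim: G g => [|G IHG] g hg.
  by move=> i a g0; move: hg g0; rewrite leqn0 => /eqP ->.
move=> i a g0 hig sa la lga.
case: g g0 hg hig lga => [//|h] _ hg hig lga.
have IH' : forall g' i' a', (0 < g')%N -> (g' < h.+1)%N -> (i' + g' < d)%N -> star a' ->
    lam i' a' != 0 -> lam (i' + g') a' != 0 -> False.
  by move=> g' i' a' g0 gh; apply: (IHG g'); lia.
pose es := mkseq (fun t => nth x0 U (i.+1 + t)) h.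
have ses : size es = h by rewrite size_mkseq.
have hes t : (t < h)%N -> nth x0 es t = nth x0 U (i.+1 + t).
  by move=> ht; rewrite nth_mkseq.
have nzes t : (t < h)%N -> lam (i.+1 + t) (nth x0 es t) != 0.
  by move=> ht; rewrite hes //; apply: nzU; lia.
have sUt t : (t < d)%N -> star (nth x0 U t).
  by move=> ht; apply: (allP sU); apply: mem_nth; rewrite hU.
have stes : all (@star n) es.
  apply/allP => z /mapP [t]; rewrite mem_iota => /andP [_ ht] ->.
  by apply: sUt; lia.
have ues : uniq es.
  apply/mkseq_uniqP => s t; rewrite !inE /= => hs ht e.
  case: (ltngtP s t) => // lst; exfalso.
  - apply: (IH' (t - s)%N (i.+1 + s)%N (nth x0 U (i.+1 + s))) => //; try lia.
    + by apply: sUt; lia.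
    + by apply: nzU; lia.
    + by rewrite e (_ : (i.+1 + s + (t - s) = i.+1 + t)%N); [apply: nzU|]; lia.
  - apply: (IH' (s - t)%N (i.+1 + t)%N (nth x0 U (i.+1 + t))) => //; try lia.
    + by apply: sUt; lia.
    + by apply: nzU; lia.
    + by rewrite -e (_ : (i.+1 + t + (s - t) = i.+1 + s)%N); [apply: nzU|]; lia.
have aes : a \notin es.
  apply/negP => /mapP [t]; rewrite mem_iota => /andP [_ ht] e.
  apply: (IH' t.+1 i a) => //; try lia.
  by rewrite e (_ : (i + t.+1 = i.+1 + t)%N); [apply: nzU|]; lia.
pose c := a :: rev es.
have sc : size c = h.+1 by rewrite /= size_rev ses.
have Jc : J (@Rf k n c).
  apply: Rf_J => //=; first by rewrite sa all_rev.
  by rewrite mem_rev aes rev_uniq.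
pose f := [seq (1, win c j) | j <- iota 0 (size c)] : ncpoly k m.
have := H1 f _ _ i (size c).+1.
have -> : ncpoly_act_at d lam f i (size c).+1 =
          \sum_(j <- iota 0 (size c)) word_act lam i (win c j).
  rewrite /ncpoly_act_at big_map big_seq_cond [RHS]big_seq_cond.
  apply: eq_big => j.
    rewrite andbT; case hj: (j \in iota 0 (size c)); rewrite ?andbF ?andbT //; move: hj; rewrite mem_iota => hj.
    by rewrite size_win ?eqxx //; lia.
  move=> /andP [hj _]; move: hj; rewrite mem_iota sc => hj.
  rewrite size_win ?sc; last by lia.
  by rewrite ifT ?mul1r //; lia.
rewrite sc /= big_cons big1_seq ?addr0.
- have allc : all (@star n) c by rewrite /= sa all_rev stes.
  have sf : forall t, t \in f -> all (star_edges n) t.2.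
    move=> t /mapP [j _ ->] /=; rewrite /win all_cat; apply/andP; split;
      apply/allP => z hz; apply: (allP allc).
      exact: mem_drop hz.
    exact: mem_take hz.
  have If : in_FK_ideal f.
    have : J (nccoef f).
      apply: J_rw Jc => w; rewrite /nccoef /f big_map /Rf.
      by apply: eq_bigr => j _.
    exact.
  move=> /(_ sf If) /eqP; apply/negP.
  rewrite win_a0 /= wa_cat size_cat size_rev ses /= addn0 mulr1.
  rewrite !mulf_neq0 //; first by rewrite addn1.
  apply: (@wa_rev x0 (i + 1) es) => t; rewrite ses => ht.
  by rewrite addn1; apply: nzes.
- move=> j; rewrite /= mem_iota => /andP [h1 h2].
  case: j h1 h2 => [//|j'] _ hj'.
  rewrite win_ai wa_cat /=.
  have -> : size (take j'.+1 (rev es)) = j'.+1.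
    by rewrite size_take size_rev ses; case: ifP => //; lia.
  have -> : lam (i + j'.+1) a = 0.
    apply/eqP; apply/negP => nz; apply: (IH' j'.+1 i a) => //; lia.
  by rewrite mul0r mulr0.
Qed.

End Mod.

Theorem proposition3p3 (k : closedFieldType) (n d : nat) :
  (n.+1 <= d)%N ->
  ~ exists lam : nat -> gen n.+1 -> k,
      is_truncated_point_module (star_edges n) d lam.
Proof.
move=> hd [lam [H1 H2]].
have [w0 [sw0 hs hw]] := H2 d (leqnn d).
case E: w0 => [|x0 w0']; first by move: hs hd; rewrite E => <-.
pose U := rev w0.
have nzU : forall t, (t < d)%N -> lam t (nth x0 U t) != 0.
  by move=> t ht; have := wa_nz x0 hw (t := t); rewrite add0n hs; apply.
have sU : all (@star n) U by rewrite all_rev.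
have hU : size U = d by rewrite size_rev.
have cl := claim H1 sU hU nzU.
pose V := mkseq (fun t => nth x0 U t) n.+1.
have sV : forall z, z \in V -> star z.
  move=> z /mapP [t]; rewrite mem_iota => /andP [_ ht] ->.
  by apply: (allP sU); apply: mem_nth; rewrite hU; lia.
have uV : uniq V.
  apply/mkseq_uniqP => s t; rewrite !inE /= => hs' ht e.
  case: (ltngtP s t) => // lst; exfalso.
  - apply: (cl (t - s)%N s (nth x0 U s)) => //; try lia.
    + by apply: (allP sU); apply: mem_nth; rewrite hU; lia.
    + by apply: nzU; lia.
    + by rewrite e (_ : (s + (t - s) = t)%N); [apply: nzU|]; lia.
  - apply: (cl (s - t)%N t (nth x0 U t)) => //; try lia.
    + by apply: (allP sU); apply: mem_nth; rewrite hU; lia.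
    + by apply: nzU; lia.
    + by rewrite -e (_ : (t + (s - t) = s)%N); [apply: nzU|]; lia.
pose V2 := [seq (val z).2 | z <- V].
have uV2 : uniq (ord0 :: V2).
  rewrite /V2 cons_uniq map_inj_in_uniq ?uV ?andbT.
    apply/negP => /mapP [z /sV zs] e.
    by have := star_pos zs; rewrite -e.
  move=> z1 z2 /sV s1 /sV s2 e; apply: star_inj => //.
  by rewrite e.
have := max_card (mem (ord0 :: V2)).
rewrite card_ord (card_uniqP uV2) /= size_map size_map size_iota.
by rewrite ltnn.
Qed.
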